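(* Fix a positive integer $M$ and a nudging parameter $\mu>0$. Then there exist solutions $\mathbf{u}(\mathbf{x},t)$ of the 2D incompressible Euler equations $$\mathbf{u}_t+\mathbf{u}\cdot\nabla\mathbf{u}=-\nabla p,\qquad\nabla\cdot\mathbf{u}=0$$ on $\mathbb{T}^2$ which cannot be recovered by the nudged system $$\mathbf{v}_t+\mathbf{v}\cdot\nabla\mathbf{v}=-\nabla q+\mu P_M(\mathbf{u}-\mathbf{v}),\qquad\nabla\cdot\mathbf{v}=0$$ with arbitrary initial condition $\mathbf{v}^{in}$; that is, for such $\mathbf{u}$ there is an initial condition $\mathbf{v}^{in}$ for which the corresponding solution $\mathbf{v}$ does not satisfy $\|\mathbf{u}(t)-\mathbf{v}(t)\|_H\to0$ as $t\to\infty$.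
   Context: $\mathbb{T}^2=[0,2\pi)^2$ with periodic boundary conditions. Let $\mathcal{V}$ be the set of $\mathbb{R}^2$-valued $2\pi$-periodic trigonometric polynomials $\varphi$ with $\nabla\cdot\varphi=0$ and $\int_{\mathbb{T}^2}\varphi=0$; $H$ is the closure of $\mathcal{V}$ in $L^2$, $V^s$ its closure in the $H^s$ seminorm; solutions of the Euler equations are taken with initial data in $V^3$ (for which the equations are globally well-posed). $P_M$ is the projection onto the Fourier modes $\mathbf{n}\in\mathbb{Z}^2\setminus\{(0,0)\}$ with $|\mathbf{n}|\le M$. *)

(* Defs.v *)
From Stdlib Require Import Reals ZArith.
From Coquelicot Require Import Coquelicot.
Open Scope R_scope.

Definition mode := (Z * Z)%type.
Definition cvec := (C * C)%type.
(* A (spatial) field on T^2 = [0,2pi)^2 given by its Fourier coefficients: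
   f(x) = sum_n fhat(n) e^{i n.x}. *)
Definition field := mode -> cvec.

Definition k1 (n : mode) : R := IZR (fst n).
Definition k2 (n : mode) : R := IZR (snd n).
Definition modsq (n : mode) : R := k1 n ^ 2 + k2 n ^ 2.
Definition mneg (n : mode) : mode := (- fst n, - snd n)%Z.
Definition msub (n m : mode) : mode := (fst n - fst m, snd n - snd m)%Z.

Definition cvsub (a b : cvec) : cvec := (Cminus (fst a) (fst b), Cminus (snd a) (snd b)).
Definition cvsq (a : cvec) : R := Cmod (fst a) ^ 2 + Cmod (snd a) ^ 2.
Definition fsub (f g : field) : field := fun n => cvsub (f n) (g n).

Definition boxsum {G : AbelianMonoid} (N : nat) (g : mode -> G) : G :=
  sum_n (fun a => sum_n (fun b =>
      g (Z.of_nat a - Z.of_nat N, Z.of_nat b - Z.of_nat N)%Z) (2 * N)) (2 * N).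

(* Squared homogeneous H^s seminorm (Fourier side, Parseval normalization:
   ||f||_{L^2}^2 = 4 pi^2 * hs_sq 0 f). *)
Definition hs_partial (s : nat) (f : field) (N : nat) : R :=
  boxsum (G := R_AbelianMonoid) N (fun n => modsq n ^ s * cvsq (f n)).
Definition hs_sq (s : nat) (f : field) : R := real (Lim_seq (hs_partial s f)).

Definition in_V (s : nat) (f : field) : Prop :=
  f (0%Z, 0%Z) = (RtoC 0, RtoC 0)
  /\ (forall n, f (mneg n) = (Cconj (fst (f n)), Cconj (snd (f n))))       (* real-valued *)
  /\ (forall n, Cplus (Cmult (RtoC (k1 n)) (fst (f n)))
                      (Cmult (RtoC (k2 n)) (snd (f n))) = RtoC 0)           (* div f = 0 *)
  /\ ex_finite_lim_seq (hs_partial s f).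

(* Fourier coefficient of (u . grad) w at mode n is
     sum_{j + l = n} (uhat(j) . (i l)) what(l);
   [conv_to u w n b] says that the square partial sums over j converge to b. *)
Definition conv_term (u w : field) (n j : mode) : cvec :=
  let l := msub n j in
  let c := Cmult Ci (Cplus (Cmult (RtoC (k1 l)) (fst (u j)))
                           (Cmult (RtoC (k2 l)) (snd (u j)))) in
  (Cmult c (fst (w l)), Cmult c (snd (w l))).
Definition conv_to (u w : field) (n : mode) (b : cvec) : Prop :=
  filterlim (fun N => boxsum (G := C_AbelianMonoid) N (fun j => fst (conv_term u w n j)))
            eventually (locally (fst b))
  /\ filterlim (fun N => boxsum (G := C_AbelianMonoid) N (fun j => snd (conv_term u w n j)))
            eventually (locally (snd b)).

Definition PM (M : nat) (f : field) : field := fun n =>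
  if ((fst n =? 0)%Z && (snd n =? 0)%Z)%bool then (RtoC 0, RtoC 0)
  else if Rle_dec (modsq n) (INR M ^ 2) then f n else (RtoC 0, RtoC 0).

Definition C0_V3 (u : R -> field) : Prop :=
  (forall t, 0 <= t -> in_V 3 (u t))
  /\ (forall t, 0 <= t -> forall eps, 0 < eps -> exists delta, 0 < delta /\
        forall s, 0 <= s -> Rabs (s - t) < delta -> hs_sq 3 (fsub (u s) (u t)) < eps).

(* Strong solution on [0,oo) of  w_t + w.grad w = -grad p + F,  div w = 0,
   written mode by mode in Fourier space, with a pressure p (Fourier
   coefficients ph) and a given forcing F (Fourier coefficients). *)
Definition forced_euler_sol (F : R -> field) (w : R -> field) : Prop :=
  C0_V3 w /\
  exists ph : R -> mode -> C,
    forall t, 0 < t -> forall n, exists b : cvec,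
      conv_to (w t) (w t) n b
      /\ is_derive (fun s => fst (w s n)) t
           (Cplus (Cminus (Copp (fst b)) (Cmult (Cmult Ci (RtoC (k1 n))) (ph t n)))
                  (fst (F t n)))
      /\ is_derive (fun s => snd (w s n)) t
           (Cplus (Cminus (Copp (snd b)) (Cmult (Cmult Ci (RtoC (k2 n))) (ph t n)))
                  (snd (F t n))).

Definition euler_sol (u : R -> field) : Prop :=
  forced_euler_sol (fun _ _ => (RtoC 0, RtoC 0)) u.

Definition nudged_sol (mu : R) (M : nat) (u v : R -> field) : Prop :=
  forced_euler_sol
    (fun t n => let d := PM M (fsub (u t) (v t)) n in
                (Cmult (RtoC mu) (fst d), Cmult (RtoC mu) (snd d))) v.

Definition H_conv (u v : R -> field) : Prop :=
  forall eps, 0 < eps -> exists T, forall t, T <= t -> hs_sq 0 (fsub (u t) (v t)) < eps.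

(* Main.v *)
Require Import Defs.
From Stdlib Require Import Reals ZArith Lra Lia Psatz Bool Classical.
From Coquelicot Require Import Coquelicot.
Open Scope R_scope.
Ltac toR := match goal with |- @eq _ ?x ?y => change (@eq R x y) end.
Ltac Cunf := unfold cvsub, Cminus, Cplus, Cmult, Copp, Cconj, RtoC, Ci in *; simpl in *.
Ltac Ceq := repeat (apply injective_projections); Cunf; try ring.

Lemma sumR_O (a : nat -> R) : @eq R (sum_n a 0) (a 0%nat).
Proof. rewrite sum_O. reflexivity. Qed.
Lemma sumR_S (a : nat -> R) n : @eq R (sum_n a (S n)) (sum_n a n + a (S n)).
Proof. rewrite sum_Sn. reflexivity. Qed.

Lemma sumR_front (a : nat -> R) n : @eq R (sum_n a (S n)) (a 0%nat + sum_n (fun k => a (S k)) n).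
Proof.
  induction n.
  - rewrite sumR_S, !sumR_O; reflexivity.
  - rewrite sumR_S, IHn, sumR_S. ring.
Qed.

Lemma sumR_le (a b : nat -> R) n : (forall k, a k <= b k) -> sum_n a n <= sum_n b n.
Proof.
  intros H; induction n.
  - rewrite !sumR_O; auto; lra.
  - rewrite !sumR_S. apply Rplus_le_compat; auto.
Qed.

Lemma sumR_nonneg (a : nat -> R) n : (forall k, 0 <= a k) -> 0 <= sum_n a n.
Proof.
  intros H; induction n.
  - rewrite sumR_O; auto.
  - rewrite sumR_S. specialize (H (S n)). lra.
Qed.

Lemma sumR_ext (a b : nat -> R) n : (forall k, a k = b k) -> @eq R (sum_n a n) (sum_n b n).
Proof. apply sum_n_ext. Qed.

Lemma sumR_plus (a b : nat -> R) n : @eq R (sum_n (fun k => a k + b k) n) (sum_n a n + sum_n b n).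
Proof.
  induction n.
  - rewrite !sumR_O; auto; lra.
  - rewrite !sumR_S, IHn. ring.
Qed.

Lemma sumR_mult_l (c : R) (a : nat -> R) n : @eq R (sum_n (fun k => c * a k) n) (c * sum_n a n).
Proof.
  induction n.
  - rewrite !sumR_O; auto; lra.
  - rewrite !sumR_S, IHn. ring.
Qed.

Lemma sumR_zero n : @eq R (sum_n (fun _ : nat => 0) n) 0.
Proof.
  induction n.
  - rewrite sumR_O; auto.
  - rewrite sumR_S, IHn. ring.
Qed.

Lemma sumR_prefix (g : nat -> R) L k : (forall i, 0 <= g i) -> sum_n g L <= sum_n g (L + k).
Proof.
  intros H; induction k.
  - rewrite Nat.add_0_r; lra.
  - rewrite Nat.add_succ_r, sumR_S. specialize (H (S (L + k))). lra.
Qed.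

Lemma sumR_sub (g : nat -> R) d L L' : (forall i, 0 <= g i) -> (d + L <= L')%nat ->
  sum_n (fun a => g (d + a)%nat) L <= sum_n g L'.
Proof.
  revert g L'; induction d; intros g L' Hg Hle.
  - simpl. replace L' with (L + (L' - L))%nat by lia. apply sumR_prefix; auto.
  - destruct L' as [|L'']; [lia|].
    rewrite sumR_front.
    assert (H1 : sum_n (fun a => g (S d + a)%nat) L <= sum_n (fun k => g (S k)) L'').
    { apply (IHd (fun k => g (S k)) L''); auto; lia. }
    specialize (Hg 0%nat). lra.
Qed.

Lemma sumR_rev (g : nat -> R) L : @eq R (sum_n (fun a => g (L - a)%nat) L) (sum_n g L).
Proof.
  revert g; induction L; intros g.
  - rewrite !sumR_O. reflexivity.
  - rewrite sumR_S. rewrite (sumR_front g).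
    rewrite Nat.sub_diag.
    rewrite <- (IHL (fun k => g (S k))).
    rewrite Rplus_comm. f_equal.
    apply sum_n_ext_loc. intros k Hk. f_equal. lia.
Qed.

Lemma zsum_inc (h : Z -> R) (c : Z) (L K : nat) : (forall z, 0 <= h z) ->
  (- Z.of_nat K <= c)%Z -> (c + Z.of_nat L <= Z.of_nat K)%Z ->
  sum_n (fun a => h (c + Z.of_nat a)%Z) L <= sum_n (fun a => h (Z.of_nat a - Z.of_nat K)%Z) (2 * K).
Proof.
  intros Hh H1 H2.
  set (d := Z.to_nat (c + Z.of_nat K)).
  rewrite (sumR_ext _ (fun a => (fun a => h (Z.of_nat a - Z.of_nat K)%Z) (d + a)%nat)).
  - apply (sumR_sub (fun a => h (Z.of_nat a - Z.of_nat K)%Z)); auto. unfold d. lia.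
  - intros k. simpl. f_equal. unfold d. lia.
Qed.

Lemma zsum_dec (h : Z -> R) (c : Z) (L K : nat) : (forall z, 0 <= h z) ->
  (- Z.of_nat K <= c - Z.of_nat L)%Z -> (c <= Z.of_nat K)%Z ->
  sum_n (fun a => h (c - Z.of_nat a)%Z) L <= sum_n (fun a => h (Z.of_nat a - Z.of_nat K)%Z) (2 * K).
Proof.
  intros Hh H1 H2.
  rewrite (sum_n_ext_loc _ (fun a => (fun b => h (c - Z.of_nat L + Z.of_nat b)%Z) (L - a)%nat)).
  - rewrite (sumR_rev (fun b => h (c - Z.of_nat L + Z.of_nat b)%Z)). apply zsum_inc; auto. lia.
  - intros k Hk. simpl. f_equal. lia.
Qed.

Notation bs := (boxsum (G:=R_AbelianMonoid)).

Lemma bs_unfold N f : bs N f = sum_n (fun a => sum_n (fun b =>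
      f (Z.of_nat a - Z.of_nat N, Z.of_nat b - Z.of_nat N)%Z) (2 * N)) (2 * N).
Proof. reflexivity. Qed.

Lemma box_sub_inc (f : mode -> R) c1 c2 L1 L2 K : (forall z, 0 <= f z) ->
  (- Z.of_nat K <= c1)%Z -> (c1 + Z.of_nat L1 <= Z.of_nat K)%Z ->
  (- Z.of_nat K <= c2)%Z -> (c2 + Z.of_nat L2 <= Z.of_nat K)%Z ->
  sum_n (fun a => sum_n (fun b => f (c1 + Z.of_nat a, c2 + Z.of_nat b)%Z) L2) L1 <= bs K f.
Proof.
  intros Hf H1 H2 H3 H4. rewrite bs_unfold.
  eapply Rle_trans.
  - apply sumR_le. intros a.
    exact (zsum_inc (fun z => f (c1 + Z.of_nat a, z)%Z) c2 L2 K (fun z => Hf _) H3 H4).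
  - refine (zsum_inc (fun x => sum_n (fun b => f (x, Z.of_nat b - Z.of_nat K)%Z) (2 * K)) c1 L1 K _ H1 H2).
    intros z. apply sumR_nonneg. auto.
Qed.

Lemma box_sub_dec (f : mode -> R) c1 c2 L1 L2 K : (forall z, 0 <= f z) ->
  (- Z.of_nat K <= c1 - Z.of_nat L1)%Z -> (c1 <= Z.of_nat K)%Z ->
  (- Z.of_nat K <= c2 - Z.of_nat L2)%Z -> (c2 <= Z.of_nat K)%Z ->
  sum_n (fun a => sum_n (fun b => f (c1 - Z.of_nat a, c2 - Z.of_nat b)%Z) L2) L1 <= bs K f.
Proof.
  intros Hf H1 H2 H3 H4. rewrite bs_unfold.
  eapply Rle_trans.
  - apply sumR_le. intros a.
    exact (zsum_dec (fun z => f (c1 - Z.of_nat a, z)%Z) c2 L2 K (fun z => Hf _) H3 H4).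
  - refine (zsum_dec (fun x => sum_n (fun b => f (x, Z.of_nat b - Z.of_nat K)%Z) (2 * K)) c1 L1 K _ H1 H2).
    intros z. apply sumR_nonneg. auto.
Qed.

Lemma bs_nonneg N f : (forall z, 0 <= f z) -> 0 <= bs N f.
Proof. intros H. rewrite bs_unfold. apply sumR_nonneg; intros; apply sumR_nonneg; auto. Qed.

Lemma bs_le N f g : (forall z, f z <= g z) -> bs N f <= bs N g.
Proof. intros H. rewrite !bs_unfold. apply sumR_le; intros; apply sumR_le; auto. Qed.

Lemma bs_ext N f g : (forall z, f z = g z) -> @eq R (bs N f) (bs N g).
Proof. intros H. rewrite !bs_unfold. apply sumR_ext; intros; apply sumR_ext; auto. Qed.

Lemma bs_plus N f g : @eq R (bs N (fun z => f z + g z)) (bs N f + bs N g).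
Proof. rewrite !bs_unfold. rewrite <- sumR_plus. apply sumR_ext; intros; apply sumR_plus. Qed.

Lemma bs_mult_l N c f : @eq R (bs N (fun z => c * f z)) (c * bs N f).
Proof. rewrite !bs_unfold. rewrite <- sumR_mult_l. apply sumR_ext; intros; apply sumR_mult_l. Qed.

Lemma bs_zero N : @eq R (bs N (fun _ => 0)) 0.
Proof. rewrite bs_unfold. transitivity (sum_n (fun _ : nat => 0) (2*N)).
  apply sumR_ext; intros; apply sumR_zero. apply sumR_zero. Qed.

Lemma bs_mono N f : (forall z, 0 <= f z) -> bs N f <= bs (S N) f.
Proof.
  intros Hf. rewrite (bs_unfold N).
  rewrite (sumR_ext _ (fun a => sum_n (fun b => f (- Z.of_nat N + Z.of_nat a, - Z.of_nat N + Z.of_nat b)%Z) (2 * N))).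
  - apply box_sub_inc; auto; lia.
  - intros a. apply sumR_ext. intros b. f_equal. f_equal; lia.
Qed.

Lemma bs_mono_le N M f : (forall z, 0 <= f z) -> (N <= M)%nat -> bs N f <= bs M f.
Proof.
  intros Hf H. induction H; [lra|]. eapply Rle_trans; [apply IHle| apply bs_mono; auto].
Qed.

Lemma bs_single K f n : (forall z, 0 <= f z) ->
  (Z.abs (fst n) <= Z.of_nat K)%Z -> (Z.abs (snd n) <= Z.of_nat K)%Z -> f n <= bs K f.
Proof.
  intros Hf H1 H2.
  assert (E : f n = sum_n (fun a => sum_n (fun b => f (fst n + Z.of_nat a, snd n + Z.of_nat b)%Z) 0) 0).
  { rewrite !sumR_O. simpl. rewrite !Z.add_0_r. destruct n; reflexivity. }
  rewrite E. apply box_sub_inc; auto; lia.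
Qed.

Definition msize (n : mode) : nat := Z.to_nat (Z.max (Z.abs (fst n)) (Z.abs (snd n))).

Lemma bs_single' f n : (forall z, 0 <= f z) -> f n <= bs (msize n) f.
Proof. intros Hf. apply bs_single; auto; unfold msize; lia. Qed.

Lemma bs_shift_dec f n J : (forall z, 0 <= f z) ->
  bs J (fun j => f (msub n j)) <= bs (msize n + J) f.
Proof.
  intros Hf. rewrite (bs_unfold J).
  rewrite (sumR_ext _ (fun a => sum_n (fun b => f (fst n + Z.of_nat J - Z.of_nat a, snd n + Z.of_nat J - Z.of_nat b)%Z) (2 * J))).
  - apply box_sub_dec; auto; unfold msize; lia.
  - intros a. apply sumR_ext. intros b. unfold msub. simpl. f_equal. f_equal; lia.
Qed.

Lemma bs_shift_inc f j N : (forall z, 0 <= f z) ->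
  bs N (fun n => f (msub n j)) <= bs (msize j + N) f.
Proof.
  intros Hf. rewrite (bs_unfold N).
  rewrite (sumR_ext _ (fun a => sum_n (fun b => f (- Z.of_nat N - fst j + Z.of_nat a, - Z.of_nat N - snd j + Z.of_nat b)%Z) (2 * N))).
  - apply box_sub_inc; auto; unfold msize; lia.
  - intros a. apply sumR_ext. intros b. unfold msub. simpl. f_equal. f_equal; lia.
Qed.

Lemma sum_n_switchR (u : nat -> nat -> R) m n :
  @eq R (sum_n (fun i => sum_n (u i) n) m) (sum_n (fun j => sum_n (fun i => u i j) m) n).
Proof. apply (sum_n_switch (G:=R_AbelianMonoid)). Qed.

Lemma bs_switch N J (F : mode -> mode -> R) :
  @eq R (bs N (fun n => bs J (fun j => F n j))) (bs J (fun j => bs N (fun n => F n j))).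
Proof.
  rewrite !bs_unfold.
  set (X := fun a b c d => F (Z.of_nat a - Z.of_nat N, Z.of_nat b - Z.of_nat N)%Z (Z.of_nat c - Z.of_nat J, Z.of_nat d - Z.of_nat J)%Z).
  change (@eq R (sum_n (fun a => sum_n (fun b => sum_n (fun c => sum_n (fun d => X a b c d) (2*J)) (2*J)) (2*N)) (2*N))
    (sum_n (fun c => sum_n (fun d => sum_n (fun a => sum_n (fun b => X a b c d) (2*N)) (2*N)) (2*J)) (2*J))).
  transitivity (sum_n (fun a => sum_n (fun c => sum_n (fun b => sum_n (fun d => X a b c d) (2*J)) (2*N)) (2*J)) (2*N)).
  { apply sumR_ext; intros a. apply sum_n_switchR. }
  rewrite sum_n_switchR. apply sumR_ext; intros c.
  transitivity (sum_n (fun a => sum_n (fun d => sum_n (fun b => X a b c d) (2*N)) (2*J)) (2*N)).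
  { apply sumR_ext; intros a. apply sum_n_switchR. }
  apply sum_n_switchR.
Qed.

Lemma sum_lim (F : nat -> nat -> R) (l : nat -> R) n :
  (forall k, is_lim_seq (fun J => F k J) (l k)) ->
  is_lim_seq (fun J => sum_n (fun k => F k J) n) (sum_n l n).
Proof.
  intros H. induction n.
  - rewrite sumR_O. apply (is_lim_seq_ext (fun J => F 0%nat J)); auto.
    intros J. rewrite sumR_O. reflexivity.
  - rewrite sumR_S.
    apply (is_lim_seq_ext (fun J => sum_n (fun k => F k J) n + F (S n) J)).
    + intros J. rewrite sumR_S. reflexivity.
    + apply is_lim_seq_plus'; auto.
Qed.

Lemma bs_lim (F : mode -> nat -> R) (l : mode -> R) N :
  (forall k, is_lim_seq (fun J => F k J) (l k)) ->
  is_lim_seq (fun J => bs N (fun k => F k J)) (bs N l).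
Proof.
  intros H. rewrite bs_unfold.
  apply (is_lim_seq_ext (fun J => sum_n (fun a => sum_n (fun b =>
      F (Z.of_nat a - Z.of_nat N, Z.of_nat b - Z.of_nat N)%Z J) (2 * N)) (2 * N))).
  { intros J. rewrite bs_unfold. reflexivity. }
  apply (sum_lim (fun a J => sum_n (fun b =>
      F (Z.of_nat a - Z.of_nat N, Z.of_nat b - Z.of_nat N)%Z J) (2 * N))).
  intros a. apply (sum_lim (fun b J => F (Z.of_nat a - Z.of_nat N, Z.of_nat b - Z.of_nat N)%Z J)).
  auto.
Qed.

Lemma sum_derive (F : R -> nat -> R) (D : nat -> R) x n :
  (forall k, is_derive (fun y => F y k) x (D k)) ->
  is_derive (fun y => sum_n (F y) n) x (sum_n D n).
Proof.
  intros H. induction n.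
  - rewrite sumR_O. apply (is_derive_ext (fun y => F y 0%nat)); auto.
    intros y. rewrite sumR_O. reflexivity.
  - rewrite sumR_S.
    apply (is_derive_ext (fun y => sum_n (F y) n + F y (S n))).
    + intros y. rewrite sumR_S. reflexivity.
    + apply (is_derive_plus (fun y => sum_n (F y) n) (fun y => F y (S n))); auto.
Qed.

Lemma bs_derive (F : R -> mode -> R) (D : mode -> R) x N :
  (forall k, is_derive (fun y => F y k) x (D k)) ->
  is_derive (fun y => bs N (F y)) x (bs N D).
Proof.
  intros H. rewrite bs_unfold.
  apply (is_derive_ext (fun y => sum_n (fun a => sum_n (fun b =>
      F y (Z.of_nat a - Z.of_nat N, Z.of_nat b - Z.of_nat N)%Z) (2 * N)) (2 * N))).
  { intros y. rewrite bs_unfold. reflexivity. }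
  apply (sum_derive (fun y a => sum_n (fun b =>
      F y (Z.of_nat a - Z.of_nat N, Z.of_nat b - Z.of_nat N)%Z) (2 * N))).
  intros a. apply (sum_derive (fun y b => F y (Z.of_nat a - Z.of_nat N, Z.of_nat b - Z.of_nat N)%Z)).
  auto.
Qed.

Lemma modsq_ge0 n : 0 <= modsq n.
Proof. unfold modsq. nra. Qed.
Lemma cvsq_ge0 a : 0 <= cvsq a.
Proof. unfold cvsq. pose proof (Cmod_ge_0 (fst a)). pose proof (Cmod_ge_0 (snd a)). nra. Qed.
Lemma hs_term_ge0 s f n : 0 <= modsq n ^ s * cvsq (f n).
Proof. apply Rmult_le_pos; [apply pow_le, modsq_ge0 | apply cvsq_ge0]. Qed.

Lemma hs_partial_bs s f N : hs_partial s f N = bs N (fun n => modsq n ^ s * cvsq (f n)).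
Proof. reflexivity. Qed.

Lemma hs_mono s f N : hs_partial s f N <= hs_partial s f (S N).
Proof. rewrite !hs_partial_bs. apply bs_mono. intros; apply hs_term_ge0. Qed.

Lemma hs_le_lim s f N : ex_finite_lim_seq (hs_partial s f) -> hs_partial s f N <= hs_sq s f.
Proof.
  intros H. unfold hs_sq.
  apply Lim_seq_correct' in H.
  apply (is_lim_seq_incr_compare _ _ H). intros; apply hs_mono.
Qed.

Lemma hs_bounded s f C : (forall N, hs_partial s f N <= C) ->
  ex_finite_lim_seq (hs_partial s f) /\ hs_sq s f <= C.
Proof.
  intros H.
  assert (Hex : ex_finite_lim_seq (hs_partial s f)).
  { apply (ex_finite_lim_seq_incr _ C); auto. intros; apply hs_mono. }
  split; auto.
  pose proof (Lim_seq_correct' _ Hex) as HL.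
  unfold hs_sq.
  pose proof (is_lim_seq_le _ (fun _ => C) _ _ H HL (is_lim_seq_const C)). simpl in H0. auto.
Qed.

Lemma hs_sq_ge0 s f : ex_finite_lim_seq (hs_partial s f) -> 0 <= hs_sq s f.
Proof.
  intros H. eapply Rle_trans; [| apply (hs_le_lim s f 0%nat H)].
  rewrite hs_partial_bs. apply bs_nonneg. intros; apply hs_term_ge0.
Qed.

Definition g1 (z : Z) : R := / (1 + IZR z ^ 2).
Definition G2 (n : mode) : R := g1 (fst n) * g1 (snd n).
Definition Gt (x : R) : R := x / (1 + Rabs x).

Lemma g1_pos z : 0 < g1 z.
Proof. unfold g1. apply Rinv_0_lt_compat. nra. Qed.

Lemma div_le_helper a b c d : 0 < b -> 0 < d -> a * d <= c * b -> a / b <= c / d.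
Proof.
  intros Hb Hd H. unfold Rdiv.
  apply (Rmult_le_reg_r (b * d)); [nra|].
  replace (a * / b * (b * d)) with (a * d) by (field; lra).
  replace (c * / d * (b * d)) with (c * b) by (field; lra). auto.
Qed.

Lemma g1_tele z : g1 z <= 4 * (Gt (IZR z + 1) - Gt (IZR z)).
Proof.
  unfold g1, Gt. set (x := IZR z).
  destruct (Z_le_gt_dec 0 z) as [Hz|Hz].
  - assert (Hx : 0 <= x) by (apply IZR_le in Hz; auto).
    rewrite (Rabs_right x) by lra. rewrite (Rabs_right (x+1)) by lra.
    replace (4 * ((x + 1) / (1 + (x + 1)) - x / (1 + x))) with (4 / ((x+1)*(x+2))) by (field; lra).
    replace (/ (1 + x^2)) with (1 / (1 + x^2)) by (field; nra).
    apply div_le_helper; nra.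
  - assert (Hx : x <= -1) by (apply IZR_le; lia).
    rewrite (Rabs_left1 x) by lra. rewrite (Rabs_left1 (x+1)) by lra.
    replace (4 * ((x + 1) / (1 + - (x + 1)) - x / (1 + - x))) with (4 / ((-x)*(1-x))) by (field; lra).
    replace (/ (1 + x^2)) with (1 / (1 + x^2)) by (field; nra).
    apply div_le_helper; nra.
Qed.

Lemma div_le_r a c d : 0 < d -> a <= c * d -> a / d <= c.
Proof. intros Hd H. apply (Rmult_le_reg_r d); auto. unfold Rdiv. rewrite Rmult_assoc, Rinv_l; lra. Qed.
Lemma div_ge_r a c d : 0 < d -> c * d <= a -> c <= a / d.
Proof. intros Hd H. apply (Rmult_le_reg_r d); auto. unfold Rdiv. rewrite Rmult_assoc, Rinv_l; lra. Qed.

Lemma Gt_bound x : -1 <= Gt x <= 1.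
Proof.
  unfold Gt. destruct (Rle_dec 0 x).
  - rewrite Rabs_right by lra. split; [apply div_ge_r | apply div_le_r]; lra.
  - rewrite Rabs_left by lra. split; [apply div_ge_r | apply div_le_r]; lra.
Qed.

Lemma g1_sum c L : sum_n (fun a => g1 (c + Z.of_nat a)%Z) L <= 4 * (Gt (IZR c + INR L + 1) - Gt (IZR c)).
Proof.
  induction L.
  - rewrite sumR_O. replace (c + Z.of_nat 0)%Z with c by lia. replace (IZR c + INR 0 + 1) with (IZR c + 1) by (simpl; ring). apply g1_tele.
  - rewrite sumR_S. pose proof (g1_tele (c + Z.of_nat (S L))%Z) as H.
    rewrite plus_IZR in H. rewrite !INR_IZR_INZ in *.
    rewrite Nat2Z.inj_succ, succ_IZR in *.
    replace (IZR c + (IZR (Z.of_nat L) + 1)) with (IZR c + IZR (Z.of_nat L) + 1) in * by ring. lra.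
Qed.

Lemma g1_sum8 c L : sum_n (fun a => g1 (c + Z.of_nat a)%Z) L <= 8.
Proof.
  eapply Rle_trans; [apply g1_sum|].
  pose proof (Gt_bound (IZR c + INR L + 1)). pose proof (Gt_bound (IZR c)). lra.
Qed.

Lemma bs_G2 N : bs N G2 <= 64.
Proof.
  rewrite bs_unfold. unfold G2. simpl fst; simpl snd.
  assert (H8 : forall a, sum_n (fun b => g1 (Z.of_nat a - Z.of_nat N) * g1 (Z.of_nat b - Z.of_nat N)) (2 * N)
                     <= g1 (Z.of_nat a - Z.of_nat N) * 8).
  { intros a. rewrite sumR_mult_l. apply Rmult_le_compat_l; [left; apply g1_pos|].
    rewrite (sumR_ext _ (fun b => g1 (- Z.of_nat N + Z.of_nat b)%Z)).
    apply g1_sum8. intros b. f_equal. lia. }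
  eapply Rle_trans; [apply sumR_le; apply H8|].
  rewrite (sumR_ext _ (fun a => 8 * g1 (- Z.of_nat N + Z.of_nat a)%Z)).
  - rewrite sumR_mult_l. pose proof (g1_sum8 (- Z.of_nat N) (2 * N)). lra.
  - intros a. rewrite Rmult_comm. f_equal. f_equal. lia.
Qed.

Definition kk (M : nat) : Z := Z.of_nat (S M).
Definition usupp (M : nat) (n : mode) : bool :=
  ((fst n =? 0)%Z && ((snd n =? kk M)%Z || (snd n =? - kk M)%Z))%bool.
Definition ufield (M : nat) : field := fun n =>
  if usupp M n then (RtoC 1, RtoC 0) else (RtoC 0, RtoC 0).
Definition zf : field := fun _ => (RtoC 0, RtoC 0).

Lemma usupp_spec M n : usupp M n = true -> fst n = 0%Z /\ (snd n = kk M \/ snd n = - kk M)%Z.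
Proof.
  unfold usupp. intros H. apply andb_prop in H. destruct H as [H1 H2].
  apply Z.eqb_eq in H1. split; auto.
  apply orb_prop in H2. destruct H2 as [H|H]; apply Z.eqb_eq in H; auto.
Qed.

Lemma usupp_modsq M n : usupp M n = true -> modsq n = INR (S M) ^ 2.
Proof.
  intros H. apply usupp_spec in H. destruct H as [H1 [H2|H2]];
  unfold modsq, k1, k2; rewrite H1, H2; unfold kk; rewrite ?opp_IZR, <- INR_IZR_INZ; simpl; ring.
Qed.

Lemma eqb_opp x y : (- x =? y)%Z = (x =? - y)%Z.
Proof. destruct (Z.eqb_spec (-x) y); destruct (Z.eqb_spec x (-y)); auto; lia. Qed.

Lemma usupp_mneg M n : usupp M (mneg n) = usupp M n.
Proof.
  unfold usupp, mneg. destruct n as [a b]. unfold fst, snd.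
  rewrite !eqb_opp. rewrite Z.opp_involutive. replace (- 0)%Z with 0%Z by lia.
  f_equal. apply orb_comm.
Qed.

Lemma cvsq_zero : cvsq (RtoC 0, RtoC 0) = 0.
Proof. unfold cvsq. simpl. rewrite Cmod_0. ring. Qed.
Lemma cvsq_one : cvsq (RtoC 1, RtoC 0) = 1.
Proof. unfold cvsq. simpl. rewrite Cmod_0, Cmod_1. ring. Qed.

Lemma in_V_zf s : in_V s zf.
Proof.
  unfold in_V, zf. split; [reflexivity|]. split.
  { intros n. Ceq. }
  split. { intros n. Ceq. }
  apply (ex_finite_lim_seq_incr _ 0).
  - intros; apply hs_mono.
  - intros N. rewrite hs_partial_bs. rewrite (bs_ext _ _ (fun _ => 0)). rewrite bs_zero; lra.
    intros z. toR. unfold zf. rewrite cvsq_zero. ring.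
Qed.

Lemma ufield_bound M s n : modsq n ^ s * cvsq (ufield M n) <= ((INR (S M) ^ 2) ^ s * (1 + INR (S M) ^ 2)) * G2 n.
Proof.
  unfold ufield. destruct (usupp M n) eqn:E.
  - rewrite cvsq_one, (usupp_modsq M n E).
    apply usupp_spec in E. destruct E as [H1 H2].
    unfold G2, g1. rewrite H1. 
    assert (Hs : IZR (snd n) ^ 2 = INR (S M) ^ 2).
    { destruct H2 as [H2|H2]; rewrite H2; unfold kk; rewrite ?opp_IZR, <- INR_IZR_INZ; ring. }
    rewrite Hs. simpl IZR. right. field. pose proof (pos_INR (S M)). nra.
  - rewrite cvsq_zero, Rmult_0_r. apply Rmult_le_pos.
    + apply Rmult_le_pos; [apply pow_le; nra|]. pose proof (pos_INR (S M)); nra.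
    + unfold G2. pose proof (g1_pos (fst n)); pose proof (g1_pos (snd n)); nra.
Qed.

Lemma ufield_partial M s N : hs_partial s (ufield M) N <= ((INR (S M) ^ 2) ^ s * (1 + INR (S M) ^ 2)) * 64.
Proof.
  rewrite hs_partial_bs. eapply Rle_trans; [apply bs_le; intros; apply ufield_bound|].
  rewrite bs_mult_l. apply Rmult_le_compat_l; [|apply bs_G2].
  apply Rmult_le_pos; [apply pow_le; nra|]. pose proof (pos_INR (S M)); nra.
Qed.

Lemma in_V_u M : in_V 3 (ufield M).
Proof.
  unfold in_V. split.
  { unfold ufield, usupp. simpl. reflexivity. }
  split.
  { intros n. unfold ufield. rewrite usupp_mneg. destruct (usupp M n); f_equal; Ceq. }
  split.
  { intros n. unfold ufield. destruct (usupp M n) eqn:E.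
    - apply usupp_spec in E. destruct E as [H1 _]. unfold k1. rewrite H1. Ceq.
    - Ceq. }
  apply (hs_bounded _ _ _ (ufield_partial M 3)).
Qed.

Lemma hs0_u M : 1 <= hs_sq 0 (ufield M).
Proof.
  assert (Hex : ex_finite_lim_seq (hs_partial 0 (ufield M))) by apply (hs_bounded _ _ _ (ufield_partial M 0)).
  eapply Rle_trans; [| apply (hs_le_lim 0 (ufield M) (msize (0, kk M)%Z) Hex)].
  rewrite hs_partial_bs.
  eapply Rle_trans; [| apply (bs_single' (fun n => modsq n ^ 0 * cvsq (ufield M n))); intros; apply hs_term_ge0].
  unfold ufield. replace (usupp M (0, kk M)%Z) with true.
  - rewrite cvsq_one. simpl. lra.
  - unfold usupp. unfold fst, snd. rewrite !Z.eqb_refl. reflexivity.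
Qed.

Lemma cvsub_zero a : cvsub a (RtoC 0, RtoC 0) = a.
Proof. destruct a as [x y]. unfold cvsub. f_equal; Ceq. Qed.

Lemma PM_u M g n : PM M (fsub (ufield M) g) n = (RtoC 0, RtoC 0) \/
                   PM M (fsub (ufield M) g) n = cvsub (RtoC 0, RtoC 0) (g n).
Proof.
  unfold PM. destruct ((fst n =? 0)%Z && (snd n =? 0)%Z)%bool; [left; auto|].
  destruct (Rle_dec (modsq n) (INR M ^ 2)) as [Hle|]; [right|left; auto].
  unfold fsub, ufield. destruct (usupp M n) eqn:E; auto.
  exfalso. rewrite (usupp_modsq M n E) in Hle. rewrite S_INR in Hle. pose proof (pos_INR M). nra.
Qed.

Lemma sum_n_zeroG {G : AbelianMonoid} n : sum_n (fun _ => @zero G) n = zero.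
Proof.
  induction n.
  - rewrite sum_O. reflexivity.
  - rewrite sum_Sn, IHn. apply plus_zero_r.
Qed.

Lemma boxsum_zeroG {G : AbelianMonoid} N : boxsum (G:=G) N (fun _ => zero) = zero.
Proof.
  unfold boxsum. rewrite (sum_n_ext _ (fun _ => zero)). apply sum_n_zeroG.
  intros; apply sum_n_zeroG.
Qed.

Lemma conv_to_zero (u w : field) n :
  (forall j, conv_term u w n j = (RtoC 0, RtoC 0)) -> conv_to u w n (RtoC 0, RtoC 0).
Proof.
  intros H. split.
  - apply (filterlim_ext (fun _ => zero)).
    + intros N. rewrite <- (boxsum_zeroG (G:=C_AbelianMonoid) N). apply sum_n_ext; intros a; apply sum_n_ext; intros b.
      rewrite H. reflexivity.
    + apply filterlim_const.
  - apply (filterlim_ext (fun _ => zero)).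
    + intros N. rewrite <- (boxsum_zeroG (G:=C_AbelianMonoid) N). apply sum_n_ext; intros a; apply sum_n_ext; intros b.
      rewrite H. reflexivity.
    + apply filterlim_const.
Qed.

Lemma is_derive_constC (c l : C) x : l = RtoC 0 -> is_derive (fun _ : R => c) x l.
Proof. intros ->. exact (is_derive_const (K:=R_AbsRing) (V:=C_R_NormedModule) c x). Qed.

Lemma conv_u M n j : conv_term (ufield M) (ufield M) n j = (RtoC 0, RtoC 0).
Proof.
  unfold conv_term. set (l := msub n j). unfold ufield.
  destruct (usupp M l) eqn:E.
  - apply usupp_spec in E. destruct E as [H1 _]. unfold k1. rewrite H1.
    destruct (usupp M j); Ceq.
  - destruct (usupp M j); Ceq.
Qed.

Lemma hs_zero_diff s f : hs_sq s (fsub f f) = 0.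
Proof.
  unfold hs_sq. rewrite (Lim_seq_ext _ (fun _ => 0)). rewrite Lim_seq_const. reflexivity.
  intros N. rewrite hs_partial_bs. rewrite (bs_ext _ _ (fun _ => 0)). apply bs_zero.
  intros z. toR. unfold fsub.
  replace (cvsub (f z) (f z)) with (RtoC 0, RtoC 0) by (Ceq). rewrite cvsq_zero. ring.
Qed.

Lemma C0_const f : in_V 3 f -> C0_V3 (fun _ => f).
Proof.
  intros H. split; auto.
  intros t _ eps Heps. exists 1. split; [lra|]. intros. rewrite hs_zero_diff. auto.
Qed.

Lemma euler_u M : euler_sol (fun _ => ufield M).
Proof.
  split; [apply C0_const, in_V_u|].
  exists (fun _ _ => RtoC 0). intros t _ n. exists (RtoC 0, RtoC 0).
  split; [apply conv_to_zero; intros; apply conv_u|].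
  split; apply is_derive_constC; Ceq.
Qed.

Lemma nudged_zero mu M : nudged_sol mu M (fun _ => ufield M) (fun _ => zf).
Proof.
  split; [apply C0_const, in_V_zf|].
  exists (fun _ _ => RtoC 0). intros t _ n. exists (RtoC 0, RtoC 0).
  split; [apply conv_to_zero; intros; unfold conv_term, zf; Ceq|].
  destruct (PM_u M zf n) as [E|E]; rewrite E; unfold zf;
  split; apply is_derive_constC; Ceq.
Qed.

Definition amod (f : field) (j : mode) : R := Cmod (fst (f j)) + Cmod (snd (f j)).
Definition wmod (f : field) (l : mode) : R := (Rabs (k1 l) + Rabs (k2 l)) * amod f l.

Lemma amod_ge0 f j : 0 <= amod f j.
Proof. unfold amod. pose proof (Cmod_ge_0 (fst (f j))). pose proof (Cmod_ge_0 (snd (f j))). lra. Qed.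
Lemma wmod_ge0 f l : 0 <= wmod f l.
Proof. unfold wmod. apply Rmult_le_pos; [pose proof (Rabs_pos (k1 l)); pose proof (Rabs_pos (k2 l)); lra| apply amod_ge0]. Qed.

Lemma amod_sq f j : amod f j ^ 2 <= 2 * cvsq (f j).
Proof. unfold amod, cvsq. set (x:= Cmod (fst (f j))). set (y := Cmod (snd (f j))). pose proof (pow2_ge_0 (x - y)). nra. Qed.

Lemma IZR_sq_ge1 z : (z <> 0)%Z -> 1 <= IZR z ^ 2.
Proof.
  intros H. assert (H1 : (1 <= z * z)%Z) by nia. apply IZR_le in H1. rewrite mult_IZR in H1. simpl. lra.
Qed.

Lemma main_ineq a b r s c : 0 <= r -> 0 <= s -> s ^ 2 <= 2 * c -> 0 <= c ->
  r ^ 2 <= 2 * (a ^ 2 + b ^ 2) -> a ^ 2 + b ^ 2 <= r ^ 2 -> 1 <= a ^ 2 + b ^ 2 ->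
  r * s <= 8 * ((a ^ 2 + b ^ 2) ^ 3 * c) + 2 * (/ (1 + a ^ 2) * / (1 + b ^ 2)).
Proof.
  intros Hr0 Hs Hs2 Hc Hr2 Hr2' Hm.
  set (m := a ^ 2 + b ^ 2) in *.
  set (P := (1 + a ^ 2) * (1 + b ^ 2)).
  assert (HP : 0 < P) by (unfold P; pose proof (pow2_ge_0 a); pose proof (pow2_ge_0 b); nra).
  replace (/ (1 + a ^ 2) * / (1 + b ^ 2)) with (/ P) by (unfold P; field; split; pose proof (pow2_ge_0 a); pose proof (pow2_ge_0 b); lra).
  assert (H3 : P <= 3 * m ^ 2).
  { unfold P, m in *. set (p := a ^ 2) in *. set (q := b ^ 2) in *.
    assert (0 <= p) by (apply pow2_ge_0). assert (0 <= q) by (apply pow2_ge_0).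
    assert (h1 : p + q <= (p + q) ^ 2).
    { replace ((p + q) ^ 2) with ((p + q) * (p + q)) by ring.
      pose proof (Rmult_le_compat_l (p + q) 1 (p + q) ltac:(lra) Hm). lra. }
    assert (h2 : 1 <= (p + q) ^ 2) by lra.
    assert (h3 : p * q <= (p + q) ^ 2).
    { assert (0 <= p * q) by (apply Rmult_le_pos; auto).
      assert (0 <= p * p) by (apply Rmult_le_pos; auto).
      assert (0 <= q * q) by (apply Rmult_le_pos; auto).
      replace ((p + q) ^ 2) with (p * p + 2 * (p * q) + q * q) by ring. lra. }
    replace ((1 + p) * (1 + q)) with (1 + (p + q) + p * q) by ring. lra. }
  assert (Hr : 0 < r ^ 2) by lra.
  assert (Hrr : 0 < r).
  { destruct (Req_dec r 0) as [Hz|Hz]; [|lra]. rewrite Hz in Hr. simpl in Hr. lra. }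
  set (X := r ^ 3 * s). set (Y := / r ^ 2).
  assert (E : r * s = X * Y) by (unfold X, Y; field; lra).
  rewrite E.
  assert (HXY : X * Y <= (X ^ 2 + Y ^ 2) / 2) by (pose proof (pow2_ge_0 (X - Y)); nra).
  assert (HX : X ^ 2 <= 16 * (m ^ 3 * c)).
  { unfold X. replace ((r ^ 3 * s) ^ 2) with ((r ^ 2) ^ 3 * s ^ 2) by ring.
    assert ((r ^ 2) ^ 3 <= (2 * m) ^ 3) by (apply pow_incr; lra).
    replace (16 * (m ^ 3 * c)) with ((2 * m) ^ 3 * (2 * c)) by ring.
    apply Rmult_le_compat; auto; [apply pow_le; lra | apply pow2_ge_0]. }
  assert (HY : Y ^ 2 <= 3 * / P).
  { unfold Y. replace ((/ r ^ 2) ^ 2) with (/ (r ^ 2) ^ 2) by (field; lra).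
    assert (m ^ 2 <= (r ^ 2) ^ 2) by (apply pow_incr; lra).
    assert (/ (r ^ 2) ^ 2 <= / m ^ 2) by (apply Rinv_le_contravar; [nra|auto]).
    assert (/ m ^ 2 <= 3 * / P).
    { replace (/ m ^ 2) with (3 * / (3 * m ^ 2)) by (field; lra).
      apply Rmult_le_compat_l; [lra|]. apply Rinv_le_contravar; auto. }
    lra. }
  assert (0 < / P) by (apply Rinv_0_lt_compat; auto).
  lra.
Qed.

Lemma wmod_bound f l : wmod f l <= 8 * (modsq l ^ 3 * cvsq (f l)) + 2 * G2 l.
Proof.
  unfold wmod, G2, g1, modsq, k1, k2.
  destruct l as [l1 l2]. simpl fst; simpl snd.
  set (a := IZR l1). set (b := IZR l2).
  set (s := amod f (l1, l2)). set (c := cvsq (f (l1, l2))).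
  assert (Hs : 0 <= s) by apply amod_ge0.
  assert (Hs2 : s ^ 2 <= 2 * c) by apply amod_sq.
  assert (Hc : 0 <= c) by apply cvsq_ge0.
  assert (Hga : 0 < / (1 + a ^ 2)) by (apply Rinv_0_lt_compat; nra).
  assert (Hgb : 0 < / (1 + b ^ 2)) by (apply Rinv_0_lt_compat; nra).
  set (r := Rabs a + Rabs b).
  assert (Hr0 : 0 <= r) by (unfold r; pose proof (Rabs_pos a); pose proof (Rabs_pos b); lra).
  assert (Hr2 : r ^ 2 <= 2 * (a ^ 2 + b ^ 2)).
  { unfold r. pose proof (Rabs_pos a); pose proof (Rabs_pos b).
    rewrite <- (pow2_abs a), <- (pow2_abs b). pose proof (pow2_ge_0 (Rabs a - Rabs b)). nra. }
  assert (Hr2' : a ^ 2 + b ^ 2 <= r ^ 2).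
  { unfold r. pose proof (Rabs_pos a); pose proof (Rabs_pos b).
    rewrite <- (pow2_abs a), <- (pow2_abs b). pose proof (Rmult_le_pos _ _ H H0). nra. }
  destruct (Z.eq_dec l1 0) as [E1|E1]; destruct (Z.eq_dec l2 0) as [E2|E2].
  - subst. assert (r = 0) by (unfold r, a, b; simpl; rewrite Rabs_R0; ring).
    rewrite H, Rmult_0_l. apply Rplus_le_le_0_compat; apply Rmult_le_pos; try lra.
    + apply Rmult_le_pos; auto. apply pow_le. pose proof (pow2_ge_0 a); pose proof (pow2_ge_0 b); lra.
    + apply Rmult_le_pos; lra.
  all: assert (Hm : 1 <= a ^ 2 + b ^ 2) by
      (first [pose proof (IZR_sq_ge1 l2 E2) | pose proof (IZR_sq_ge1 l1 E1)]; fold a b in H;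
       pose proof (pow2_ge_0 a); pose proof (pow2_ge_0 b); lra).
  all: clear E1 E2.
  all: apply (main_ineq a b r s c); auto.
Qed.

Lemma W_bound f H : (forall M, hs_partial 3 f M <= H) -> forall M, bs M (wmod f) <= 8 * H + 128.
Proof.
  intros HH M. eapply Rle_trans; [apply bs_le; intros; apply wmod_bound|].
  rewrite bs_plus, !bs_mult_l. rewrite <- hs_partial_bs.
  pose proof (HH M). pose proof (bs_G2 M). lra.
Qed.

Lemma conv_bound f n j :
  Cmod (fst (conv_term f f n j)) <= amod f j * wmod f (msub n j) /\
  Cmod (snd (conv_term f f n j)) <= amod f j * wmod f (msub n j).
Proof.
  unfold conv_term. set (l := msub n j). simpl fst; simpl snd.
  set (c := (Ci * (RtoC (k1 l) * fst (f j) + RtoC (k2 l) * snd (f j)))%C).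
  assert (Hc : Cmod c <= (Rabs (k1 l) + Rabs (k2 l)) * amod f j).
  { unfold c. rewrite Cmod_mult, Cmod_Ci, Rmult_1_l.
    eapply Rle_trans; [apply Cmod_triangle|]. rewrite !Cmod_mult, !Cmod_R.
    unfold amod. pose proof (Cmod_ge_0 (fst (f j))). pose proof (Cmod_ge_0 (snd (f j))).
    pose proof (Rabs_pos (k1 l)). pose proof (Rabs_pos (k2 l)).
    assert (Rabs (k1 l) * Cmod (fst (f j)) <= (Rabs (k1 l) + Rabs (k2 l)) * Cmod (fst (f j))) by (apply Rmult_le_compat_r; lra).
    assert (Rabs (k2 l) * Cmod (snd (f j)) <= (Rabs (k1 l) + Rabs (k2 l)) * Cmod (snd (f j))) by (apply Rmult_le_compat_r; lra).
    lra. }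
  assert (Hc0 : 0 <= Cmod c) by apply Cmod_ge_0.
  unfold wmod. fold l.
  assert (Hl1 : Cmod (fst (f l)) <= amod f l) by (unfold amod; pose proof (Cmod_ge_0 (snd (f l))); lra).
  assert (Hl2 : Cmod (snd (f l)) <= amod f l) by (unfold amod; pose proof (Cmod_ge_0 (fst (f l))); lra).
  pose proof (amod_ge0 f l). pose proof (amod_ge0 f j).
  replace (amod f j * ((Rabs (k1 l) + Rabs (k2 l)) * amod f l)) with (((Rabs (k1 l) + Rabs (k2 l)) * amod f j) * amod f l) by ring.
  split; rewrite Cmod_mult; apply Rmult_le_compat; auto; apply Cmod_ge_0.
Qed.

Lemma Cmod_sum (g : nat -> C) n : Cmod (sum_n (G:=C_AbelianMonoid) g n) <= sum_n (fun k => Cmod (g k)) n.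
Proof.
  induction n.
  - rewrite sum_O, sumR_O. lra.
  - rewrite sum_Sn, sumR_S. eapply Rle_trans; [apply Cmod_triangle|]. lra.
Qed.

Lemma Cmod_boxsum (g : mode -> C) J : Cmod (boxsum (G:=C_AbelianMonoid) J g) <= bs J (fun j => Cmod (g j)).
Proof.
  unfold boxsum at 1. eapply Rle_trans; [apply Cmod_sum|]. rewrite bs_unfold.
  apply sumR_le. intros a. apply Cmod_sum.
Qed.

Lemma E_bs f N : hs_partial 0 f N = bs N (fun n => cvsq (f n)).
Proof. rewrite hs_partial_bs. apply bs_ext. intros z. toR. simpl. ring. Qed.

Lemma DS_bound f B W N J : (forall M, hs_partial 0 f M <= B) -> (forall M, bs M (wmod f) <= W) ->
  bs N (fun n => amod f n * bs J (fun j => amod f j * wmod f (msub n j))) <= 2 * B * W.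
Proof.
  intros HB HW.
  assert (HW' : forall n, bs J (fun j => wmod f (msub n j)) <= W).
  { intros n. eapply Rle_trans; [apply bs_shift_dec; intros; apply wmod_ge0|]. apply HW. }
  assert (HW'' : forall j, bs N (fun n => wmod f (msub n j)) <= W).
  { intros j. eapply Rle_trans; [apply bs_shift_inc; intros; apply wmod_ge0|]. apply HW. }
  assert (HA : forall M, bs M (fun n => amod f n ^ 2) <= 2 * B).
  { intros M. eapply Rle_trans; [apply bs_le; intros; apply amod_sq|]. rewrite bs_mult_l.
    rewrite <- E_bs. pose proof (HB M). lra. }
  assert (HW0 : 0 <= W) by (eapply Rle_trans; [apply bs_nonneg; intros; apply wmod_ge0| apply (HW 0%nat)]).
  rewrite (bs_ext _ _ (fun n => bs J (fun j => amod f n * amod f j * wmod f (msub n j)))).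
  2:{ intros n. toR. rewrite <- bs_mult_l. apply bs_ext. intros j. toR. ring. }
  eapply Rle_trans.
  { apply bs_le. intros n. apply bs_le. intros j.
    instantiate (1 := fun j => / 2 * (amod f n ^ 2 * wmod f (msub n j)) + / 2 * (amod f j ^ 2 * wmod f (msub n j))).
    simpl. pose proof (wmod_ge0 f (msub n j)). pose proof (pow2_ge_0 (amod f n - amod f j)).
    assert (0 <= (amod f n - amod f j) ^ 2 * wmod f (msub n j)) by (apply Rmult_le_pos; auto).
    nra. }
  rewrite (bs_ext _ _ (fun n => / 2 * (amod f n ^ 2 * bs J (fun j => wmod f (msub n j))) +
                                 bs J (fun j => / 2 * (amod f j ^ 2 * wmod f (msub n j))))).
  2:{ intros n. toR. rewrite bs_plus. f_equal. rewrite <- bs_mult_l. rewrite <- bs_mult_l. apply bs_ext. intros j. toR. ring. }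
  rewrite bs_plus. rewrite bs_switch.
  assert (T1 : bs N (fun n => / 2 * (amod f n ^ 2 * bs J (fun j => wmod f (msub n j)))) <= / 2 * (2 * B * W)).
  { rewrite bs_mult_l. apply Rmult_le_compat_l; [lra|].
    eapply Rle_trans; [apply bs_le; intros n; apply Rmult_le_compat_l; [apply pow2_ge_0| apply (HW' n)]|].
    rewrite (bs_ext _ _ (fun n => W * amod f n ^ 2)) by (intros; toR; ring).
    rewrite bs_mult_l. pose proof (HA N). nra. }
  assert (T2 : bs J (fun j => bs N (fun n => / 2 * (amod f j ^ 2 * wmod f (msub n j)))) <= / 2 * (2 * B * W)).
  { rewrite (bs_ext _ _ (fun j => / 2 * (amod f j ^ 2 * bs N (fun n => wmod f (msub n j))))).
    2:{ intros j. toR. rewrite <- bs_mult_l, <- bs_mult_l. apply bs_ext. intros. toR. ring. }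
    rewrite bs_mult_l. apply Rmult_le_compat_l; [lra|].
    eapply Rle_trans; [apply bs_le; intros j; apply Rmult_le_compat_l; [apply pow2_ge_0| apply (HW'' j)]|].
    rewrite (bs_ext _ _ (fun j => W * amod f j ^ 2)) by (intros; toR; ring).
    rewrite bs_mult_l. pose proof (HA J). nra. }
  lra.
Qed.

Definition Sseq (f : field) (n : mode) (J : nat) : R := bs J (fun j => amod f j * wmod f (msub n j)).
Definition Ubar (f : field) (n : mode) : R := real (Lim_seq (Sseq f n)).

Lemma cvsq_le_E f j : cvsq (f j) <= hs_partial 0 f (msize j).
Proof.
  rewrite E_bs. apply (bs_single' (fun n => cvsq (f n))). intros; apply cvsq_ge0.
Qed.

Lemma Ubar_lim f B W n : (forall M, hs_partial 0 f M <= B) -> (forall M, bs M (wmod f) <= W) ->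
  is_lim_seq (Sseq f n) (Ubar f n) /\ forall J, Sseq f n J <= Ubar f n.
Proof.
  intros HB HW.
  assert (Ha : forall j, amod f j <= 1 + 2 * B).
  { intros j. pose proof (amod_sq f j). pose proof (cvsq_le_E f j). pose proof (HB (msize j)).
    pose proof (amod_ge0 f j). pose proof (pow2_ge_0 (amod f j - 1)). nra. }
  assert (HB0 : 0 <= B) by (eapply Rle_trans; [|apply (HB 0%nat)]; rewrite E_bs; apply bs_nonneg; intros; apply cvsq_ge0).
  assert (Hmono : forall J, Sseq f n J <= Sseq f n (S J)).
  { intros J. unfold Sseq. apply bs_mono. intros; apply Rmult_le_pos; [apply amod_ge0|apply wmod_ge0]. }
  assert (Hex : ex_finite_lim_seq (Sseq f n)).
  { apply (ex_finite_lim_seq_incr _ ((1 + 2 * B) * W)); auto.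
    intros J. unfold Sseq.
    eapply Rle_trans; [apply bs_le; intros j; apply Rmult_le_compat_r; [apply wmod_ge0| apply (Ha j)]|].
    rewrite bs_mult_l. apply Rmult_le_compat_l; [lra|].
    eapply Rle_trans; [apply bs_shift_dec; intros; apply wmod_ge0| apply HW]. }
  pose proof (Lim_seq_correct' _ Hex) as HL.
  split; auto.
  intros J. apply (is_lim_seq_incr_compare _ _ HL Hmono).
Qed.

Lemma sumU f B W N : (forall M, hs_partial 0 f M <= B) -> (forall M, bs M (wmod f) <= W) ->
  bs N (fun n => amod f n * Ubar f n) <= 2 * B * W.
Proof.
  intros HB HW.
  assert (HL : is_lim_seq (fun J => bs N (fun n => amod f n * Sseq f n J)) (bs N (fun n => amod f n * Ubar f n))).
  { apply (bs_lim (fun n J => amod f n * Sseq f n J)). intros n.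
    destruct (Ubar_lim f B W n HB HW) as [H _].
    apply (is_lim_seq_scal_l _ (amod f n) _ H). }
  pose proof (is_lim_seq_le _ (fun _ => 2 * B * W) _ _ (fun J => DS_bound f B W N J HB HW) HL (is_lim_seq_const _)).
  simpl in H. auto.
Qed.

Lemma is_derive_Re (f : R -> C) t l : is_derive f t l -> is_derive (fun s => fst (f s)) t (fst l).
Proof.
  intros H. unfold is_derive in *.
  eapply filterdiff_ext_lin.
  apply (filterdiff_comp f (fun z : C => fst z) _ (fun z : C => fst z) H).
  apply filterdiff_linear. apply (is_linear_fst (U:=R_NormedModule) (V:=R_NormedModule)).
  intros y. simpl. reflexivity.
Qed.
Lemma is_derive_Im (f : R -> C) t l : is_derive f t l -> is_derive (fun s => snd (f s)) t (snd l).
Proof.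
  intros H. unfold is_derive in *.
  eapply filterdiff_ext_lin.
  apply (filterdiff_comp f (fun z : C => snd z) _ (fun z : C => snd z) H).
  apply filterdiff_linear. apply (is_linear_snd (U:=R_NormedModule) (V:=R_NormedModule)).
  intros y. simpl. reflexivity.
Qed.

Lemma Cmod_sq (z : C) : Cmod z ^ 2 = fst z ^ 2 + snd z ^ 2.
Proof. unfold Cmod. rewrite pow2_sqrt; auto. pose proof (pow2_ge_0 (fst z)); pose proof (pow2_ge_0 (snd z)); lra. Qed.

Lemma sq_le a c : 0 <= c -> a ^ 2 <= c ^ 2 -> a <= c.
Proof. intros Hc H. destruct (Rle_dec a c); auto. exfalso. assert (c < a) by lra. nra. Qed.

Lemma CS_ineq (z b : C) : - (fst z * fst b + snd z * snd b) <= Cmod z * Cmod b.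
Proof.
  apply sq_le; [apply Rmult_le_pos; apply Cmod_ge_0|].
  replace ((Cmod z * Cmod b) ^ 2) with (Cmod z ^ 2 * Cmod b ^ 2) by ring.
  rewrite !Cmod_sq. destruct z as [x y]; destruct b as [p q]; simpl.
  pose proof (pow2_ge_0 (x * q - y * p)). nra.
Qed.

Lemma cvsq_expand (a : C * C) : cvsq a = fst (fst a) ^ 2 + snd (fst a) ^ 2 + (fst (snd a) ^ 2 + snd (snd a) ^ 2).
Proof. unfold cvsq. rewrite !Cmod_sq. ring. Qed.

Lemma mode_deriv_bound (z : R -> C * C) xi (b : C * C) (ph : C) (k1v k2v mu : R) (d : C * C) U :
  is_derive (fun s => fst (z s)) xi
     (Cplus (Cminus (Copp (fst b)) (Cmult (Cmult Ci (RtoC k1v)) ph)) (Cmult (RtoC mu) (fst d))) ->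
  is_derive (fun s => snd (z s)) xi
     (Cplus (Cminus (Copp (snd b)) (Cmult (Cmult Ci (RtoC k2v)) ph)) (Cmult (RtoC mu) (snd d))) ->
  Cplus (Cmult (RtoC k1v) (fst (z xi))) (Cmult (RtoC k2v) (snd (z xi))) = RtoC 0 ->
  (d = (RtoC 0, RtoC 0) \/ d = cvsub (RtoC 0, RtoC 0) (z xi)) -> 0 < mu ->
  Cmod (fst b) <= U -> Cmod (snd b) <= U ->
  exists D, is_derive (fun s => cvsq (z s)) xi D /\
            D <= 2 * (Cmod (fst (z xi)) + Cmod (snd (z xi))) * U.
Proof.
  intros H1 H2 Hdiv Hd Hmu Hb1 Hb2.
  set (D1 := Cplus (Cminus (Copp (fst b)) (Cmult (Cmult Ci (RtoC k1v)) ph)) (Cmult (RtoC mu) (fst d))) in *.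
  set (D2 := Cplus (Cminus (Copp (snd b)) (Cmult (Cmult Ci (RtoC k2v)) ph)) (Cmult (RtoC mu) (snd d))) in *.
  pose proof (is_derive_Re _ _ _ H1) as R1. pose proof (is_derive_Im _ _ _ H1) as I1.
  pose proof (is_derive_Re _ _ _ H2) as R2. pose proof (is_derive_Im _ _ _ H2) as I2.
  simpl in R1, I1, R2, I2.
  exists (2 * (fst (fst (z xi)) * fst D1 + snd (fst (z xi)) * snd D1 + fst (snd (z xi)) * fst D2 + snd (snd (z xi)) * snd D2)).
  split.
  - apply (is_derive_ext (fun s => fst (fst (z s)) ^ 2 + snd (fst (z s)) ^ 2 + (fst (snd (z s)) ^ 2 + snd (snd (z s)) ^ 2))).
    { intros s. rewrite cvsq_expand. reflexivity. }
    assert (Hsq : forall (g : R -> R) l, is_derive g xi l -> is_derive (fun s => g s ^ 2) xi (2 * g xi * l)).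
    { intros g l Hg. pose proof (is_derive_pow g 2 xi l Hg) as HH.
      replace (2 * g xi * l) with (INR 2 * l * g xi ^ Init.Nat.pred 2) by (simpl; ring). exact HH. }
    pose proof (Hsq _ _ R1) as S1. pose proof (Hsq _ _ I1) as S2.
    pose proof (Hsq _ _ R2) as S3. pose proof (Hsq _ _ I2) as S4.
    pose proof (is_derive_plus _ _ _ _ _ S1 S2) as P12.
    pose proof (is_derive_plus _ _ _ _ _ S3 S4) as P34.
    pose proof (is_derive_plus _ _ _ _ _ P12 P34) as P.
    simpl in P. 
    match type of P with is_derive _ _ ?l => replace (2 * (fst (fst (z xi)) * fst D1 + snd (fst (z xi)) * snd D1 + fst (snd (z xi)) * fst D2 + snd (snd (z xi)) * snd D2)) with l end.
    + exact P.
    + unfold plus; simpl. ring.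
  - pose proof (CS_ineq (fst (z xi)) (fst b)) as C1.
    pose proof (CS_ineq (fst (z xi)) (snd b)) as C1'.
    pose proof (CS_ineq (snd (z xi)) (snd b)) as C2.
    assert (M1 : Cmod (fst (z xi)) * Cmod (fst b) <= Cmod (fst (z xi)) * U) by (apply Rmult_le_compat_l; auto; apply Cmod_ge_0).
    assert (M2 : Cmod (snd (z xi)) * Cmod (snd b) <= Cmod (snd (z xi)) * U) by (apply Rmult_le_compat_l; auto; apply Cmod_ge_0).
    assert (Hre := f_equal fst Hdiv). assert (Him := f_equal snd Hdiv).
    revert C1 C2 M1 M2 Hre Him.
    unfold D1, D2. clear D1 D2 H1 H2 R1 I1 R2 I2 Hdiv C1'.
    generalize (Cmod (fst (z xi))) (Cmod (snd (z xi))).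
    destruct Hd as [-> | ->];
    destruct (z xi) as [[x1 y1] [x2 y2]]; destruct b as [[p1 q1] [p2 q2]]; destruct ph as [pr pi];
    Cunf; intros A1 A2 C1 C2 M1 M2 Hre Him.
    + assert (E1 : pi * (k1v * x1 - 0 * y1 + (k2v * x2 - 0 * y2)) = 0) by (rewrite Hre; ring).
      assert (E2 : pr * (k1v * y1 + 0 * x1 + (k2v * y2 + 0 * x2)) = 0) by (rewrite Him; ring).
      ring_simplify in E1. ring_simplify in E2. ring_simplify. nra.
    + assert (E1 : pi * (k1v * x1 - 0 * y1 + (k2v * x2 - 0 * y2)) = 0) by (rewrite Hre; ring).
      assert (E2 : pr * (k1v * y1 + 0 * x1 + (k2v * y2 + 0 * x2)) = 0) by (rewrite Him; ring).
      assert (F : 0 <= mu * (x1 ^ 2 + y1 ^ 2 + x2 ^ 2 + y2 ^ 2)).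
      { apply Rmult_le_pos; [lra|]. pose proof (pow2_ge_0 x1); pose proof (pow2_ge_0 x2);
        pose proof (pow2_ge_0 y1); pose proof (pow2_ge_0 y2); lra. }
      ring_simplify in E1. ring_simplify in E2. ring_simplify in F. ring_simplify. nra.
Qed.

Lemma lim_Cmod (S : nat -> C) (l : C) : filterlim S eventually (locally l) ->
  is_lim_seq (fun J => Cmod (S J)) (Cmod l).
Proof.
  intros H. unfold is_lim_seq.
  apply (filterlim_ext (fun J => @norm R_AbsRing C_R_NormedModule (S J))). { intros J. symmetry. apply Cmod_norm. }
  rewrite Cmod_norm.
  apply (filterlim_comp _ _ _ S (@norm R_AbsRing C_R_NormedModule) eventually (locally l)); auto.
  apply (filterlim_norm (K:=R_AbsRing) (V:=C_R_NormedModule)).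
Qed.

Lemma b_bound f n b B W : (forall M, hs_partial 0 f M <= B) -> (forall M, bs M (wmod f) <= W) ->
  conv_to f f n b -> Cmod (fst b) <= Ubar f n /\ Cmod (snd b) <= Ubar f n.
Proof.
  intros HB HW [Hf Hs].
  destruct (Ubar_lim f B W n HB HW) as [HU _].
  split.
  - pose proof (lim_Cmod _ _ Hf) as HL.
    assert (Hle : forall J, Cmod (boxsum (G:=C_AbelianMonoid) J (fun j => fst (conv_term f f n j))) <= Sseq f n J).
    { intros J. eapply Rle_trans; [apply Cmod_boxsum|]. unfold Sseq. apply bs_le. intros j. apply conv_bound. }
    pose proof (is_lim_seq_le _ _ _ _ Hle HL HU). simpl in H. auto.
  - pose proof (lim_Cmod _ _ Hs) as HL.
    assert (Hle : forall J, Cmod (boxsum (G:=C_AbelianMonoid) J (fun j => snd (conv_term f f n j))) <= Sseq f n J).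
    { intros J. eapply Rle_trans; [apply Cmod_boxsum|]. unfold Sseq. apply bs_le. intros j. apply conv_bound. }
    pose proof (is_lim_seq_le _ _ _ _ Hle HL HU). simpl in H. auto.
Qed.

Lemma E_le_hs3 f N : f (0%Z, 0%Z) = (RtoC 0, RtoC 0) -> hs_partial 0 f N <= hs_partial 3 f N.
Proof.
  intros H0. rewrite !hs_partial_bs. apply bs_le. intros [a b].
  destruct (Z.eq_dec a 0) as [Ea|Ea]; destruct (Z.eq_dec b 0) as [Eb|Eb].
  - subst. rewrite H0, cvsq_zero. lra.
  - assert (1 <= modsq (a, b)).
    { unfold modsq, k1, k2; simpl. pose proof (IZR_sq_ge1 b Eb). pose proof (pow2_ge_0 (IZR a)). lra. }
    assert (1 <= modsq (a, b) ^ 3) by (replace 1 with (1 ^ 3) by ring; apply pow_incr; lra).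
    pose proof (cvsq_ge0 (f (a, b))). simpl. nra.
  - assert (1 <= modsq (a, b)).
    { unfold modsq, k1, k2; simpl. pose proof (IZR_sq_ge1 a Ea). pose proof (pow2_ge_0 (IZR b)). lra. }
    assert (1 <= modsq (a, b) ^ 3) by (replace 1 with (1 ^ 3) by ring; apply pow_incr; lra).
    pose proof (cvsq_ge0 (f (a, b))). simpl. nra.
  - assert (1 <= modsq (a, b)).
    { unfold modsq, k1, k2; simpl. pose proof (IZR_sq_ge1 a Ea). pose proof (pow2_ge_0 (IZR b)). lra. }
    assert (1 <= modsq (a, b) ^ 3) by (replace 1 with (1 ^ 3) by ring; apply pow_incr; lra).
    pose proof (cvsq_ge0 (f (a, b))). simpl. nra.
Qed.

Lemma cvsq_tri a b : cvsq a <= 2 * cvsq (cvsub a b) + 2 * cvsq b.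
Proof.
  rewrite !cvsq_expand. destruct a as [[a1 a2] [a3 a4]]; destruct b as [[b1 b2] [b3 b4]]. Cunf.
  pose proof (pow2_ge_0 (a1 - 2 * b1)). pose proof (pow2_ge_0 (a2 - 2 * b2)).
  pose proof (pow2_ge_0 (a3 - 2 * b3)). pose proof (pow2_ge_0 (a4 - 2 * b4)). nra.
Qed.

Lemma cvsq_sub a b : cvsq (cvsub a b) <= 2 * cvsq a + 2 * cvsq b.
Proof.
  rewrite !cvsq_expand. destruct a as [[a1 a2] [a3 a4]]; destruct b as [[b1 b2] [b3 b4]]. Cunf.
  pose proof (pow2_ge_0 (a1 + b1)). pose proof (pow2_ge_0 (a2 + b2)).
  pose proof (pow2_ge_0 (a3 + b3)). pose proof (pow2_ge_0 (a4 + b4)). nra.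
Qed.

Lemma hs_fsub_fin s f g : ex_finite_lim_seq (hs_partial s f) -> ex_finite_lim_seq (hs_partial s g) ->
  ex_finite_lim_seq (hs_partial s (fsub f g)).
Proof.
  intros Hf Hg.
  apply (hs_bounded _ _ (2 * hs_sq s f + 2 * hs_sq s g)).
  intros N. eapply Rle_trans.
  - rewrite hs_partial_bs. apply bs_le. intros n. unfold fsub.
    apply Rmult_le_compat_l; [apply pow_le, modsq_ge0|]. apply (cvsq_sub (f n) (g n)).
  - rewrite (bs_ext _ _ (fun n => 2 * (modsq n ^ s * cvsq (f n)) + 2 * (modsq n ^ s * cvsq (g n)))) by (intros; toR; ring).
    rewrite bs_plus, !bs_mult_l, <- !hs_partial_bs.
    pose proof (hs_le_lim s f N Hf). pose proof (hs_le_lim s g N Hg). lra.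
Qed.

Lemma local_H v : C0_V3 v -> forall t0, 0 <= t0 -> exists delta, 0 < delta /\ exists H, 0 <= H /\
  forall xi, 0 <= xi -> Rabs (xi - t0) < delta -> forall Mb, hs_partial 3 (v xi) Mb <= H.
Proof.
  intros [HV HC] t0 Ht0.
  destruct (HC t0 Ht0 1 ltac:(lra)) as [delta [Hd Hcont]].
  exists delta. split; auto.
  assert (Hf0 : ex_finite_lim_seq (hs_partial 3 (v t0))) by (apply (HV t0 Ht0)).
  exists (2 * hs_sq 3 (v t0) + 2). split.
  { pose proof (hs_sq_ge0 3 _ Hf0). lra. }
  intros xi Hxi Hdist Mb.
  assert (Hf1 : ex_finite_lim_seq (hs_partial 3 (v xi))) by (apply (HV xi Hxi)).
  pose proof (hs_fsub_fin 3 _ _ Hf1 Hf0) as Hfs.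
  pose proof (Hcont xi Hxi Hdist) as Hlt.
  eapply Rle_trans.
  - rewrite hs_partial_bs. apply bs_le. intros n.
    apply Rmult_le_compat_l; [apply pow_le, modsq_ge0|]. apply (cvsq_tri (v xi n) (v t0 n)).
  - rewrite (bs_ext _ _ (fun n => 2 * (modsq n ^ 3 * cvsq (fsub (v xi) (v t0) n)) + 2 * (modsq n ^ 3 * cvsq (v t0 n)))) by (intros; toR; unfold fsub; ring).
    rewrite bs_plus, !bs_mult_l, <- !hs_partial_bs.
    pose proof (hs_le_lim 3 _ Mb Hfs). pose proof (hs_le_lim 3 _ Mb Hf0). lra.
Qed.

Lemma deriv_E M mu v : 0 < mu -> nudged_sol mu M (fun _ => ufield M) v ->
  forall xi, 0 < xi -> forall B W, (forall Mb, hs_partial 0 (v xi) Mb <= B) ->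
  (forall Mb, bs Mb (wmod (v xi)) <= W) -> forall N,
  ex_derive (fun y => hs_partial 0 (v y) N) xi /\ Derive (fun y => hs_partial 0 (v y) N) xi <= 4 * B * W.
Proof.
  intros Hmu [[HV HC] [ph Hph]] xi Hxi B W HB HW N.
  assert (Hmode : forall n, exists D, is_derive (fun s => cvsq (v s n)) xi D /\
                  D <= 2 * amod (v xi) n * Ubar (v xi) n).
  { intros n. destruct (Hph xi Hxi n) as [b [Hconv [Hd1 Hd2]]].
    destruct (b_bound (v xi) n b B W HB HW Hconv) as [Hb1 Hb2].
    destruct (HV xi (Rlt_le _ _ Hxi)) as [_ [_ [Hdiv _]]].
    destruct (mode_deriv_bound (fun s => v s n) xi b (ph xi n) (k1 n) (k2 n) mu
               (PM M (fsub (ufield M) (v xi)) n) (Ubar (v xi) n) Hd1 Hd2 (Hdiv n) (PM_u M (v xi) n) Hmu Hb1 Hb2)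
      as [D [HD HDb]].
    exists D; split; [exact HD | unfold amod; lra]. }
  assert (Hmode' : forall n, is_derive (fun s => cvsq (v s n)) xi (Derive (fun s => cvsq (v s n)) xi) /\
                  Derive (fun s => cvsq (v s n)) xi <= 2 * amod (v xi) n * Ubar (v xi) n).
  { intros n. destruct (Hmode n) as [D [HD HDb]].
    assert (E : Derive (fun s => cvsq (v s n)) xi = D) by (apply is_derive_unique; exact HD).
    rewrite E. auto. }
  assert (HDer : is_derive (fun y => hs_partial 0 (v y) N) xi (bs N (fun n => Derive (fun s => cvsq (v s n)) xi))).
  { apply (is_derive_ext (fun y => bs N (fun n => cvsq (v y n)))).
    { intros y. rewrite E_bs. reflexivity. }
    apply (bs_derive (fun y n => cvsq (v y n))). intros n. apply Hmode'. }
  split; [eexists; eauto|].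
  assert (E : Derive (fun y => hs_partial 0 (v y) N) xi = bs N (fun n => Derive (fun s => cvsq (v s n)) xi))
    by (apply is_derive_unique; exact HDer).
  rewrite E.
  eapply Rle_trans; [apply bs_le; intros n; apply Hmode'|].
  rewrite (bs_ext _ _ (fun n => 2 * (amod (v xi) n * Ubar (v xi) n))) by (intros; toR; ring).
  rewrite bs_mult_l. pose proof (sumU (v xi) B W N HB HW). lra.
Qed.

Lemma Rmax_cont s x : continuity_pt (fun y => Rmax s y) x.
Proof.
  unfold continuity_pt, continue_in, limit1_in, limit_in. simpl. unfold R_dist.
  intros eps Heps. exists eps. split; auto. intros y [_ Hy].
  apply Rabs_def2 in Hy. destruct Hy as [Hy1 Hy2].
  unfold Rmax. destruct (Rle_dec s y); destruct (Rle_dec s x); apply Rabs_def1; lra.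
Qed.

Lemma fsub_zf f : forall n, fsub f zf n = f n.
Proof. intros n. unfold fsub, zf. apply cvsub_zero. Qed.

Lemma stepA M mu v : 0 < mu -> nudged_sol mu M (fun _ => ufield M) v -> v 0 = zf ->
  forall s t, 0 <= s -> s <= t -> forall H, 0 <= H ->
  (forall xi, s <= xi <= t -> forall Mb, hs_partial 3 (v xi) Mb <= H) ->
  forall B, (forall xi, s <= xi <= t -> forall Mb, hs_partial 0 (v xi) Mb <= B) ->
  forall N, hs_partial 0 (v t) N <= hs_partial 0 (v s) N + 4 * B * (8 * H + 128) * (t - s).
Proof.
  intros Hmu Hv Hv0 s t Hs Hst H HH0 HH B HB N.
  set (W := 8 * H + 128).
  assert (HW : forall xi, s <= xi <= t -> forall Mb, bs Mb (wmod (v xi)) <= W).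
  { intros xi Hxi. apply W_bound. apply HH; auto. }
  assert (HB0 : 0 <= B).
  { eapply Rle_trans; [|apply (HB s ltac:(lra) 0%nat)]. rewrite E_bs. apply bs_nonneg. intros; apply cvsq_ge0. }
  assert (HW0 : 0 <= W) by (unfold W; lra).
  destruct (Req_dec s t) as [Eq|Hlt].
  { subst t. rewrite Rminus_diag, Rmult_0_r. lra. }
  assert (Hlt' : s < t) by lra. clear Hlt.
  set (E := fun y => hs_partial 0 (v y) N).
  set (g := fun x => E (Rmax s x)).
  set (df := fun x => if Rlt_dec s x then (if Rlt_dec x t then Derive E x else 0) else 0).
  assert (Hder : forall x, s < x < t -> ex_derive E x /\ Derive E x <= 4 * B * W).
  { intros x Hx. apply (deriv_E M mu v Hmu Hv x ltac:(lra) B W); [apply HB; lra | apply HW; lra]. }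
  assert (Hcont : forall x, s <= x <= t -> 0 < x -> continuity_pt E x).
  { intros x Hx Hx0. apply continuity_pt_filterlim.
    assert (Hex : ex_derive E x).
    { apply (deriv_E M mu v Hmu Hv x Hx0 B W); [apply HB; lra | apply HW; lra]. }
    exact (ex_derive_continuous (K:=R_AbsRing) (V:=R_NormedModule) E x Hex). }
  destruct (MVT_gen g s t df) as [c [Hc Hmvt]].
  - rewrite Rmin_left, Rmax_right by lra. intros x Hx.
    unfold df. destruct (Rlt_dec s x); [|lra]. destruct (Rlt_dec x t); [|lra].
    apply (is_derive_ext_loc E).
    + assert (Hpos : 0 < x - s) by lra. exists (mkposreal _ Hpos). intros y Hy.
      unfold ball in Hy; simpl in Hy; unfold AbsRing_ball, abs, minus, plus, opp in Hy; simpl in Hy.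
      apply Rabs_def2 in Hy. unfold g. rewrite Rmax_right by lra. reflexivity.
    + apply Derive_correct. apply Hder; lra.
  - rewrite Rmin_left, Rmax_right by lra. intros x Hx.
    destruct (Rlt_dec 0 x) as [Hx0|Hx0].
    + apply (continuity_pt_comp (fun y => Rmax s y) E x); [apply Rmax_cont|].
      rewrite Rmax_right by lra. apply Hcont; lra.
    + assert (x = 0) by lra. assert (s = 0) by lra. subst x s.
      unfold continuity_pt, continue_in, limit1_in, limit_in.
      intros eps Heps.
      destruct Hv as [[HV HC] _].
      destruct (HC 0 (Rle_refl 0) eps Heps) as [d0 [Hd0 Hcd]].
      exists d0. split; auto. intros y [_ Hy].
      change (Rabs (y - 0) < d0) in Hy.
      change (Rabs (g y - g 0) < eps).
      unfold g. rewrite (Rmax_left 0 0) by lra.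
      assert (E0 : E 0 = 0).
      { unfold E. rewrite E_bs, Hv0. rewrite (bs_ext _ _ (fun _ => 0)). apply bs_zero.
        intros; toR; apply cvsq_zero. }
      rewrite E0. rewrite Rminus_0_r.
      set (y' := Rmax 0 y).
      assert (Hy' : 0 <= y') by apply Rmax_l.
      assert (Hy'd : Rabs (y' - 0) < d0).
      { unfold y', Rmax. destruct (Rle_dec 0 y); rewrite Rminus_0_r in *; auto. rewrite Rabs_R0; auto. }
      pose proof (Hcd y' Hy' Hy'd) as Hlt.
      assert (Hfin : ex_finite_lim_seq (hs_partial 3 (v y'))) by (apply (HV y' Hy')).
      assert (Heq : forall K, hs_partial 3 (fsub (v y') (v 0)) K = hs_partial 3 (v y') K).
      { intros K. rewrite !hs_partial_bs. apply bs_ext. intros n. rewrite Hv0, fsub_zf. reflexivity. }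
      assert (Hsq : hs_sq 3 (fsub (v y') (v 0)) = hs_sq 3 (v y')).
      { unfold hs_sq. rewrite (Lim_seq_ext _ _ Heq). reflexivity. }
      rewrite Hsq in Hlt.
      assert (HE0 : 0 <= E y') by (unfold E; rewrite E_bs; apply bs_nonneg; intros; apply cvsq_ge0).
      rewrite Rabs_right by lra.
      eapply Rle_lt_trans; [| exact Hlt].
      unfold E.
      apply (Rle_trans _ (hs_partial 3 (v y') N)).
      + apply E_le_hs3. exact (proj1 (HV y' Hy')).
      + apply hs_le_lim. exact Hfin.
  - rewrite Rmin_left, Rmax_right in Hc by lra.
    unfold g in Hmvt. rewrite Rmax_right in Hmvt by lra. rewrite Rmax_left in Hmvt by lra.
    assert (Hdc : df c <= 4 * B * W).
    { unfold df. destruct (Rlt_dec s c); [destruct (Rlt_dec c t)|].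
      - apply Hder; lra.
      - apply Rmult_le_pos; [lra|auto].
      - apply Rmult_le_pos; [lra|auto]. }
    unfold E in Hmvt. fold W. nra.
Qed.

Lemma pow2_ge_INR k : INR k <= 2 ^ k.
Proof.
  induction k.
  - simpl. lra.
  - rewrite S_INR. simpl. assert (1 <= 2 ^ k) by (apply pow_R1_Rle; lra). lra.
Qed.

Lemma le_all_halves x H : 0 <= H -> (forall k, x <= H / 2 ^ k) -> x <= 0.
Proof.
  intros HH Hk. destruct (Rle_dec x 0) as [|Hx]; auto. exfalso.
  assert (Hx' : 0 < x) by lra.
  destruct (archimed (H / x)) as [Ha _].
  set (n := Z.to_nat (up (H / x))).
  assert (Hn : H / x < INR n).
  { unfold n. rewrite INR_IZR_INZ. rewrite Z2Nat.id. auto.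
    apply le_IZR. assert (0 <= H / x) by (apply Rmult_le_pos; [auto| left; apply Rinv_0_lt_compat; auto]). lra. }
  pose proof (pow2_ge_INR n). pose proof (Hk n).
  assert (Hp : 0 < 2 ^ n) by (apply pow_lt; lra).
  assert (H / 2 ^ n < x).
  { apply (Rmult_lt_reg_r (2 ^ n)); auto. unfold Rdiv. rewrite Rmult_assoc, Rinv_l by lra. rewrite Rmult_1_r.
    assert (H < x * INR n).
    { apply (Rmult_lt_reg_r (/ x)); [apply Rinv_0_lt_compat; auto|].
      replace (x * INR n * / x) with (INR n) by (field; lra). auto. }
    nra. }
  lra.
Qed.

Lemma E0_zf v N : v 0 = zf -> hs_partial 0 (v 0) N = 0.
Proof.
  intros Hv0. rewrite E_bs, Hv0. rewrite (bs_ext _ _ (fun _ => 0)). apply bs_zero.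
  intros; toR; apply cvsq_zero.
Qed.

Lemma all_zero M mu v : 0 < mu -> nudged_sol mu M (fun _ => ufield M) v -> v 0 = zf ->
  forall T, 0 <= T -> forall xi, 0 <= xi <= T -> forall N, hs_partial 0 (v xi) N <= 0.
Proof.
  intros Hmu Hv Hv0.
  set (P := fun t => forall xi, 0 <= xi <= t -> forall N, hs_partial 0 (v xi) N <= 0).
  change (forall T, 0 <= T -> P T).
  intros T HT. apply NNPP. intros HnP.
  set (A := fun t => 0 <= t <= T /\ P t).
  assert (HA0 : A 0).
  { split; [lra|]. intros xi Hxi N. assert (xi = 0) by lra. subst xi. rewrite E0_zf; auto. lra. }
  assert (Hbd : bound A) by (exists T; intros x [Hx _]; lra).
  destruct (completeness A Hbd (ex_intro _ 0 HA0)) as [Sm [HSub HSl]].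
  assert (HS0 : 0 <= Sm) by (apply HSub; auto).
  assert (HST : Sm <= T) by (apply HSl; intros x [Hx _]; lra).
  assert (Hbelow : forall xi, 0 <= xi < Sm -> forall N, hs_partial 0 (v xi) N <= 0).
  { intros xi Hxi N. apply NNPP. intros Hneg.
    assert (Hub : is_upper_bound A xi).
    { intros t [Ht HPt]. destruct (Rle_dec t xi); auto. exfalso. apply Hneg. apply HPt. lra. }
    pose proof (HSl xi Hub). lra. }
  assert (HC : C0_V3 v) by (destruct Hv as [HC _]; exact HC).
  destruct (local_H v HC Sm HS0) as [delta [Hd [H [HH0 HHb]]]].
  set (W := 8 * H + 128).
  assert (HW : 0 < W) by (unfold W; lra).
  set (h := Rmin (delta / 2) (1 / (16 * W))).
  assert (Hh : 0 < h) by (unfold h; apply Rmin_pos; [lra| apply Rdiv_lt_0_compat; lra]).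
  assert (Hh1 : h <= delta / 2) by apply Rmin_l.
  assert (Hh2 : h <= 1 / (16 * W)) by apply Rmin_r.
  set (s := Rmax 0 (Sm - h)).
  assert (Hs0 : 0 <= s) by apply Rmax_l.
  assert (Hs1 : Sm - h <= s) by apply Rmax_r.
  assert (Hs2 : s <= Sm) by (unfold s; apply Rmax_lub; lra).
  assert (Es : forall N, hs_partial 0 (v s) N <= 0).
  { intros N. unfold s, Rmax. destruct (Rle_dec 0 (Sm - h)).
    - apply Hbelow. lra.
    - rewrite E0_zf; auto; lra. }
  assert (HHI : forall xi, s <= xi <= Sm + h -> forall Mb, hs_partial 3 (v xi) Mb <= H).
  { intros xi Hxi. apply HHb; [lra|]. apply Rabs_def1; lra. }
  assert (Hk : forall k, forall xi, s <= xi <= Sm + h -> forall N, hs_partial 0 (v xi) N <= H / 2 ^ k).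
  { induction k.
    - intros xi Hxi N. simpl. rewrite Rdiv_1_r. eapply Rle_trans; [apply E_le_hs3|apply (HHI xi Hxi)].
      destruct HC as [HV _]. exact (proj1 (HV xi ltac:(lra))).
    - intros xi Hxi N.
      assert (Hp : 0 < 2 ^ k) by (apply pow_lt; lra).
      pose proof (stepA M mu v Hmu Hv Hv0 s xi Hs0 ltac:(lra) H HH0
                  (fun x Hx => HHI x ltac:(lra)) (H / 2 ^ k) (fun x Hx => IHk x ltac:(lra)) N) as Hst.
      fold W in Hst. pose proof (Es N).
      assert (HB0 : 0 <= H / 2 ^ k) by (apply Rdiv_le_0_compat; lra).
      assert (Hlen : 4 * (H / 2 ^ k) * W * (xi - s) <= (H / 2 ^ k) / 2).
      { assert (xi - s <= 2 * h) by lra.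
        assert (4 * W * (xi - s) <= 1 / 2).
        { assert (4 * W * (2 * h) <= 1/2).
          { assert (W * h <= W * (1 / (16 * W))) by (apply Rmult_le_compat_l; lra).
            replace (W * (1 / (16 * W))) with (1 / 16) in H2 by (field; lra). lra. }
          assert (4 * W * (xi - s) <= 4 * W * (2 * h)) by (apply Rmult_le_compat_l; lra). lra. }
        replace (4 * (H / 2 ^ k) * W * (xi - s)) with ((H / 2 ^ k) * (4 * W * (xi - s))) by ring.
        assert ((H / 2 ^ k) * (4 * W * (xi - s)) <= (H / 2 ^ k) * (1 / 2)) by (apply Rmult_le_compat_l; lra).
        lra. }
      replace (H / 2 ^ S k) with (H / 2 ^ k / 2) by (simpl; field; lra). lra. }
  assert (HPSh : P (Sm + h)).
  { intros xi Hxi N. destruct (Rlt_dec xi Sm).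
    - apply Hbelow; lra.
    - apply (le_all_halves _ H HH0). intros k. apply Hk. lra. }
  destruct (Rle_dec (Sm + h) T).
  - assert (A (Sm + h)) by (split; [lra| auto]).
    pose proof (HSub _ H0). lra.
  - apply HnP. intros xi Hxi N. apply HPSh. lra.
Qed.

Theorem corollary4p5 (M : nat) (mu : R) :
  (0 < M)%nat -> 0 < mu ->
  exists u : R -> field, euler_sol u /\
    exists vin : field, in_V 3 vin /\
      (exists v, nudged_sol mu M u v /\ v 0 = vin) /\
      (forall v, nudged_sol mu M u v -> v 0 = vin -> ~ H_conv u v).
Proof.
  intros _ Hmu.
  exists (fun _ => ufield M). split; [apply euler_u|].
  exists zf. split; [apply in_V_zf|]. split.
  { exists (fun _ => zf). split; [apply nudged_zero| reflexivity]. }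
  intros v Hv Hv0 Hconv.
  destruct (Hconv 1 Rlt_0_1) as [T HT].
  set (t := Rmax T 0).
  pose proof (HT t (Rmax_l T 0)) as Hlt.
  assert (Ht0 : 0 <= t) by apply Rmax_r.
  assert (Hz : forall n, v t n = (RtoC 0, RtoC 0)).
  { intros n.
    pose proof (all_zero M mu v Hmu Hv Hv0 t Ht0 t ltac:(lra) (msize n)) as HE.
    pose proof (cvsq_le_E (v t) n) as Hc.
    assert (Hc0 : cvsq (v t n) = 0) by (pose proof (cvsq_ge0 (v t n)); lra).
    unfold cvsq in Hc0.
    pose proof (Cmod_ge_0 (fst (v t n))). pose proof (Cmod_ge_0 (snd (v t n))).
    assert (Cmod (fst (v t n)) = 0) by nra.
    assert (Cmod (snd (v t n)) = 0) by nra.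
    apply Cmod_eq_0 in H1. apply Cmod_eq_0 in H2.
    destruct (v t n) as [a b]. simpl in H1, H2. rewrite H1, H2. reflexivity. }
  assert (Heq : forall K, hs_partial 0 (fsub (ufield M) (v t)) K = hs_partial 0 (ufield M) K).
  { intros K. rewrite !hs_partial_bs. apply bs_ext. intros n. unfold fsub. rewrite Hz, cvsub_zero. reflexivity. }
  assert (Hsq : hs_sq 0 (fsub (ufield M) (v t)) = hs_sq 0 (ufield M)).
  { unfold hs_sq. rewrite (Lim_seq_ext _ _ Heq). reflexivity. }
  simpl in Hlt. rewrite Hsq in Hlt. pose proof (hs0_u M). lra.
Qed.
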